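(* Let $1\le p<\infty$ and for each positive integer $k$ let $Q_k=1-k+\dfrac{k^{1+1/p}}{(k+1)^{1/p}}$. Then $1-p^{-1}\le Q_k\le 2^{-1/p}$ for every positive integer $k$. *)

(* Defs.v *)
From Stdlib Require Import Reals.
Open Scope R_scope.

Definition Qk (p : R) (k : nat) : R :=
  1 - INR k + Rpower (INR k) (1 + 1 / p) / Rpower (INR k + 1) (1 / p).

(* Main.v *)
Require Import Defs.
From Stdlib Require Import Reals Lra Psatz.
Open Scope R_scope.

Lemma expB (c u : R) : 0 <= c <= 1 -> exp (c * u) <= c * exp u + 1 - c.
Proof.
  intros [h0 h1].
  set (m := exp (c * u)).
  assert (hm : 0 < m) by apply exp_pos.
  assert (e1 : exp u = m * exp ((1 - c) * u)).
  { unfold m; rewrite <- exp_plus; f_equal; ring. }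
  assert (e2 : 1 = m * exp (- (c * u))).
  { unfold m; rewrite <- exp_plus, <- exp_0; f_equal; ring. }
  pose proof (exp_ineq1_le ((1 - c) * u)) as i1.
  pose proof (exp_ineq1_le (- (c * u))) as i2.
  assert (m * (1 + (1 - c) * u) <= exp u) by (rewrite e1; apply Rmult_le_compat_l; lra).
  assert (m * (1 + - (c * u)) <= 1) by (rewrite e2 at 2; apply Rmult_le_compat_l; lra).
  assert (c * (m * (1 + (1 - c) * u)) <= c * exp u) by (apply Rmult_le_compat_l; lra).
  assert ((1 - c) * (m * (1 + - (c * u))) <= (1 - c) * 1) by (apply Rmult_le_compat_l; lra).
  nra.
Qed.

Lemma expC (b u : R) : 1 <= b -> 1 + b * (exp u - 1) <= exp (b * u).
Proof.
  intros hb.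
  pose proof (expB (/ b) (b * u)) as H.
  assert (0 < / b <= 1).
  { split. apply Rinv_0_lt_compat; lra.
    rewrite <- Rinv_1. apply Rinv_le_contravar; lra. }
  replace (/ b * (b * u)) with u in H by (field; lra).
  specialize (H ltac:(lra)).
  apply Rmult_le_compat_l with (r := b) in H; [|lra].
  replace (b * (/ b * exp (b * u) + 1 - / b)) with (exp (b * u) + b - 1) in H by (field; lra).
  lra.
Qed.

Theorem lemma5p8 (p : R) (hp : 1 <= p) (k : nat) (hk : (1 <= k)%nat) :
  1 - / p <= Qk p k /\ Qk p k <= Rpower 2 (- (1 / p)).
Proof.
  unfold Qk, Rpower.
  set (K := INR k).
  assert (hK : 1 <= K) by (unfold K; change 1 with (INR 1); apply le_INR; exact hk).
  set (a := 1 / p).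
  assert (ha : 0 < a <= 1).
  { unfold a; split. apply Rdiv_lt_0_compat; lra.
    unfold Rdiv; rewrite Rmult_1_l, <- Rinv_1. apply Rinv_le_contravar; lra. }
  assert (hia : / p = a) by (unfold a; field; lra).
  rewrite hia.
  set (L1 := ln K). set (L2 := ln (K + 1)).
  assert (eK : exp L1 = K) by (apply exp_ln; lra).
  assert (eK1 : exp L2 = K + 1) by (apply exp_ln; lra).
  assert (eX : exp ((1 + a) * L1) / exp (a * L2) = exp ((1 + a) * L1 - a * L2)).
  { unfold Rdiv; rewrite <- exp_Ropp, <- exp_plus; f_equal; ring. }
  rewrite eX.
  set (M := L1 - L2).
  assert (eM : exp (- M) = (K + 1) / K).
  { unfold M; replace (- (L1 - L2)) with (L2 + - L1) by ring.
    rewrite exp_plus, exp_Ropp, eK, eK1. reflexivity. }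
  split.
  -
    assert (eX2 : exp ((1 + a) * L1 - a * L2) = K * exp (a * M)).
    { rewrite <- eK. rewrite <- exp_plus. f_equal. unfold M; ring. }
    rewrite eX2.
    set (s := exp (a * M)).
    set (t := exp (a * (- M))).
    assert (hs : 0 < s) by apply exp_pos.
    assert (hst : s * t = 1).
    { unfold s, t; rewrite <- exp_plus, <- exp_0; f_equal; ring. }
    assert (ht : t <= 1 + a / K).
    { unfold t. pose proof (expB a (- M) ltac:(lra)) as H. rewrite eM in H.
      replace (1 + a / K) with (a * ((K + 1) / K) + 1 - a) by (field; lra). exact H. }
    assert (h1 : K <= s * (K + a)).
    { apply Rmult_le_compat_l with (r := s * K) in ht; [|nra].
      replace (s * K * (1 + a / K)) with (s * (K + a)) in ht by (field; lra).
      nra. }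
    nra.
  -
    set (b := 1 + a).
    assert (eX2 : exp (b * L1 - a * L2) = (K + 1) * exp (b * M)).
    { rewrite <- eK1. rewrite <- exp_plus. f_equal. unfold M, b; ring. }
    rewrite eX2.
    set (E := exp (b * M)).
    set (L := ln 2).
    assert (hE : 0 < E) by apply exp_pos.
    assert (hb : 1 <= b) by (unfold b; lra).
    assert (f1 : E * (1 + b * ((K + 1) / K - 1)) <= 1).
    { pose proof (expC b (- M) hb) as H. rewrite eM in H.
      apply Rmult_le_compat_l with (r := E) in H; [|lra].
      replace (E * exp (b * - M)) with 1 in H; [lra|].
      unfold E; rewrite <- exp_plus, <- exp_0; f_equal; ring. }
    assert (e2 : exp (- L - M) = (K + 1) / (2 * K)).
    { replace (- L - M) with (- L + - M) by ring.
      rewrite exp_plus, eM, exp_Ropp. unfold L; rewrite exp_ln by lra. field; lra. }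
    set (F := exp (b * - L)).
    assert (f2 : E * (1 + b * ((K + 1) / (2 * K) - 1)) <= F).
    { pose proof (expC b (- L - M) hb) as H. rewrite e2 in H.
      apply Rmult_le_compat_l with (r := E) in H; [|lra].
      replace (E * exp (b * (- L - M))) with F in H; [lra|].
      unfold E, F; rewrite <- exp_plus; f_equal; ring. }
    assert (eF : exp (- a * L) = 2 * F).
    { unfold F. assert (eL : exp L = 2) by (unfold L; apply exp_ln; lra).
      transitivity (exp L * exp (b * - L)).
      - rewrite <- exp_plus; f_equal; unfold b; ring.
      - rewrite eL; reflexivity. }
    replace (- (1 / p) * ln 2) with (- a * L) by (unfold a, L; ring).
    rewrite eF.
    assert (g1 : E * (K + b) <= K).
    { replace (E * (K + b)) with (K * (E * (1 + b * ((K + 1) / K - 1)))) by (field; lra).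
      nra. }
    assert (g2 : E * (2 * K + b * (1 - K)) <= 2 * K * F).
    { replace (E * (2 * K + b * (1 - K))) with (2 * K * (E * (1 + b * ((K + 1) / (2 * K) - 1)))) by (field; lra).
      nra. }
    assert (g3 : E * K * (K + 1) <= K * (K - 1) + 2 * K * F) by nra.
    assert (g4 : K * (1 - K + (K + 1) * E) <= K * (2 * F)) by nra.
    apply Rmult_le_reg_l with K; lra.
Qed.
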